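(* Let $n$ be a prime with $n\equiv 1$ or $5\pmod 6$. Then there exists a one-factorization $\mathcal{T}$ of $K_{2n}$ on the vertex set $\{0,1,\dots,2n-1\}$ such that: (1) if $n\equiv 5\pmod 6$, then $\mathcal{T}=\{\mathcal{T}_{i,j}: 1\le i\le \frac{2n-1}{3},\ 1\le j\le 3\}$, where $\mathcal{T}_{i,1}\cup\mathcal{T}_{i,2}\cup\mathcal{T}_{i,3}=\mathcal{A}_i\cup\mathcal{B}_i\cup\mathcal{D}_{i-1}$ for $1\le i\le\frac{n-1}{2}$, and $\mathcal{T}_{i,1}=\mathcal{D}_{3i-n-2}$, $\mathcal{T}_{i,2}=\mathcal{D}_{3i-n-1}$, $\mathcal{T}_{i,3}=\mathcal{D}_{3i-n}$ for $\frac{n+1}{2}\le i\le\frac{2n-1}{3}$; (2) if $n\equiv 1\pmod 6$, then $\mathcal{T}=\{\mathcal{T}_{i,j}: 1\le i\le\frac{n-1}{2},\ 1\le j\le 3\}\cup\{\mathcal{D}_i:\frac{n-1}{2}\le i\le n-1\}$, where $\mathcal{T}_{i,1}\cup\mathcal{T}_{i,2}\cup\mathcal{T}_{i,3}=\mathcal{A}_i\cup\mathcal{B}_i\cup\mathcal{D}_{i-1}$ for $1\le i\le \frac{n-1}{2}$.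
   Context: For $1\le i\le \frac{n-1}{2}$: $\mathcal{A}_i=\{\{x,y\}: x,y\in\{0,\dots,n-1\},\ y-x\equiv i \pmod n\}$ and $\mathcal{B}_i=\{\{x,y\}: x,y\in\{n,\dots,2n-1\},\ y-x\equiv i\pmod n\}$. For $0\le i\le n-1$: $\mathcal{D}_i=\{\{x,y\}: 0\le x\le n-1,\ n\le y\le 2n-1,\ y-x\equiv i\pmod n\}$. A one-factor of $K_{2n}$ is a perfect matching; a one-factorization is a partition of the edge set of $K_{2n}$ into $2n-1$ one-factors. *)

(* Defs.v *)
From mathcomp Require Import all_boot.
Set Implicit Arguments. Unset Strict Implicit. Unset Printing Implicit Defensive.

Notation vtx n := ('I_(2 * n)).

Definition is_edge n (e : {set vtx n}) : bool := #|e| == 2.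

Definition Aset n (i : nat) : {set {set vtx n}} :=
  [set e | [exists x : vtx n, exists y : vtx n,
     [&& x < n, y < n, (x + i) %% n == y %% n & e == [set x; y]]]].

Definition Bset n (i : nat) : {set {set vtx n}} :=
  [set e | [exists x : vtx n, exists y : vtx n,
     [&& n <= x, n <= y, (x + i) %% n == y %% n & e == [set x; y]]]].

Definition Dset n (i : nat) : {set {set vtx n}} :=
  [set e | [exists x : vtx n, exists y : vtx n,
     [&& x < n, n <= y, (x + i) %% n == y %% n & e == [set x; y]]]].

Definition one_factor n (F : {set {set vtx n}}) : Prop :=
  (forall e, e \in F -> is_edge e) /\
  (forall v : vtx n, #|[set e in F | v \in e]| = 1).

Definition one_factorization n (T : seq {set {set vtx n}}) : Prop :=
  size T = (2 * n).-1 /\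
  (forall F, F \in T -> one_factor F) /\
  (forall e : {set vtx n}, is_edge e -> count (fun F : {set {set vtx n}} => e \in F) T = 1).

(* Main.v *)
Require Import Defs.
From mathcomp Require Import all_boot zify.
Set Implicit Arguments. Unset Strict Implicit. Unset Printing Implicit Defensive.

Ltac splitifs := repeat match goal with |- context [if ?b then _ else _] => lazymatch b with context [if _ then _ else _] => fail | _ => let E := fresh "E" in case E: b => /= end end.

Section Constr.
Variable n : nat.
Hypothesis Hn2 : n %% 2 = 1.
Hypothesis Hn3 : 3 <= n.
Local Notation h := ((n - 1) %/ 2).

Definition addm x i := if x + i < n then x + i else x + i - n.
Definition subm x i := if i <= x then x - i else x + n - i.
Definition colA i x := if n <= x + i then 2 else (x %/ i) %% 2.
Definition colM i x := if x < i then 1 else if n <= x + i then (x %/ i) %% 2 else 2.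

Lemma divS i z : 0 < i -> i <= z -> z %/ i = (z - i) %/ i + 1.
Proof.
move=> i0 iz. have -> : z = (z - i) + i by lia.
rewrite divnDr // divnn i0 addnK //.
Qed.

Lemma col_ne i z : 1 <= i <= h -> z < n ->
  [/\ colA i z != colA i (subm z i), colM i z != colA i z
    & colM i z != colA i (subm z i)].
Proof.
move=> Hi Hz; rewrite /colA /colM /subm.
have i0 : 0 < i by lia.
case: (ltnP z i) => zi.
- rewrite (divn_small zi).
  repeat case: ifP => ?; try (exfalso; lia); split; apply/eqP; lia.
- rewrite (divS i0 zi). move: ((z - i) %/ i) => q.
  repeat case: ifP => ?; try (exfalso; lia); split; apply/eqP; lia.
Qed.

Lemma colA_lt i z : colA i z < 3.
Proof. rewrite /colA; case: ifP => _ //; apply: (leq_trans (ltn_pmod _ _)) => //. Qed.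
Lemma colM_lt i z : colM i z < 3.
Proof. rewrite /colM; repeat case: ifP => _ //; apply: (leq_trans (ltn_pmod _ _)) => //. Qed.

Lemma L1 x y : x < n -> y < n -> addm x (subm y x) = y.
Proof. rewrite /addm /subm; splitifs; lia. Qed.
Lemma L2 x y : x < n -> y < n -> x != y -> subm x (n - subm y x) = y.
Proof. move=> ? ? /eqP ?; rewrite /addm /subm; splitifs; lia. Qed.
Lemma L3 a i j : a < n -> i < n -> j < n -> subm (subm a i) j = subm (subm a j) i.
Proof. move=> *; rewrite /addm /subm; splitifs; lia. Qed.
Lemma subm_lt a i : a < n -> i < n -> subm a i < n.
Proof. move=> *; rewrite /addm /subm; splitifs; lia. Qed.
Lemma addm_lt a i : a < n -> i < n -> addm a i < n.
Proof. move=> *; rewrite /addm /subm; splitifs; lia. Qed.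
Lemma L4 x y : x < n -> y < n -> x != y -> subm x y = n - subm y x.
Proof. move=> ? ? /eqP ?; rewrite /addm /subm; splitifs; lia. Qed.

Variable Dlab : nat -> nat * nat.
Variable Dinv : nat * nat -> nat.
Definition Tlab (k : nat * nat) := (1 <= k.1 <= h) && (1 <= k.2 <= 3).
Hypothesis HDinv : forall d, h <= d < n -> Dinv (Dlab d) = d.
Hypothesis HDT : forall d, h <= d < n -> ~~ Tlab (Dlab d).

Definition pos (u : vtx n) : nat := if u < n then (u : nat) else u - n.
Definition zpos i (u : vtx n) : nat := if u < n then (u : nat) else subm (u - n) i.-1.

Definition col (u v : vtx n) : nat * nat :=
 if (u < n) == (v < n) then
   let d := subm (pos v) (pos u) in
   if d <= h then (d, (colA d (zpos d u)).+1)
   else (n - d, (colA (n - d) (zpos (n - d) v)).+1)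
 else
   let x := if u < n then pos u else pos v in
   let y := if u < n then pos v else pos u in
   let d := subm y x in
   if d < h then (d.+1, (colM d.+1 x).+1) else Dlab d.

Definition P (u : vtx n) (k : nat * nat) : nat :=
 if Tlab k then
   let i := k.1 in let c := k.2 in let z := zpos i u in
   if c == (colA i z).+1 then (if u < n then addm (pos u) i else n + addm (pos u) i)
   else if c == (colA i (subm z i)).+1 then
     (if u < n then subm (pos u) i else n + subm (pos u) i)
   else (if u < n then n + addm (pos u) i.-1 else z)
 else let d := Dinv k in if u < n then n + addm (pos u) d else subm (pos u) d.

Lemma L5 x y : x < n -> y < n -> subm y (subm y x) = x.
Proof. move=> *; rewrite /addm /subm; splitifs; lia. Qed.
Lemma subm0 x y : x < n -> y < n -> x != y -> 0 < subm y x.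
Proof. move=> ? ? /eqP ?; rewrite /addm /subm; splitifs; lia. Qed.

Lemma P_col u v : u != v -> P u (col u v) = v.
Proof.
move=> /eqP uv. have uv' : (u:nat) <> v by move=> E; apply uv; apply: val_inj.
have := ltn_ord u; have := ltn_ord v.
rewrite /col /pos /zpos.
case Hu: (u < n); case Hv: (v < n) => /= Hv2 Hu2.
- have ne : (u:nat) != v by apply/eqP.
  have d0 := subm0 Hu Hv ne.
  have dn := subm_lt Hv Hu.
  case: ifP => Hd.
  + have HT : Tlab (subm v u, (colA (subm v u) u).+1).
      by rewrite /Tlab /=; have := colA_lt (subm v u) u; lia.
    rewrite /P HT /zpos /pos Hu /= eqxx. exact: L1.
  + set i := n - subm v u.
    have HT : Tlab (i, (colA i v).+1).
      by rewrite /Tlab /=; have := colA_lt i v; lia.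
    have Ev : subm u i = v by apply: L2.
    have Hi : 1 <= i <= h by lia.
    have [ne1 _ _] := col_ne Hi Hu.
    rewrite Ev in ne1.
    rewrite /P HT /zpos /pos Hu /= eqSS eq_sym (negbTE ne1) Ev eqxx //.
- set d := subm (v - n) u.
  have dn : d < n by apply: subm_lt; lia.
  case: ifP => Hd.
  + have HT : Tlab (d.+1, (colM d.+1 u).+1).
      by rewrite /Tlab /=; have := colM_lt d.+1 u; lia.
    have Hi : 1 <= d.+1 <= h by lia.
    have [_ ne2 ne3] := col_ne Hi Hu.
    rewrite /P HT /zpos /pos Hu /= !eqSS (negbTE ne2) (negbTE ne3) /=.
    rewrite /d L1; lia.
  + have Hd' : h <= d < n by lia.
    rewrite /P (negbTE (HDT Hd')) HDinv // /pos Hu /d L1; lia.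
- set d := subm (u - n) v.
  have dn : d < n by apply: subm_lt; lia.
  have Ez : subm (u - n) d = v by apply: L5; lia.
  case: ifP => Hd.
  + have HT : Tlab (d.+1, (colM d.+1 v).+1).
      by rewrite /Tlab /=; have := colM_lt d.+1 v; lia.
    have Hi : 1 <= d.+1 <= h by lia.
    have [_ ne2 ne3] := col_ne Hi Hv.
    rewrite /P HT /zpos /pos Hu /= Ez !eqSS (negbTE ne2) (negbTE ne3) //.
  + have Hd' : h <= d < n by lia.
    rewrite /P (negbTE (HDT Hd')) HDinv // /pos Hu Ez //.
- have an : u - n < n by lia.
  have bn : v - n < n by lia.
  have ne : u - n != v - n by apply/eqP; lia.
  have d0 := subm0 an bn ne.
  have dn := subm_lt bn an.
  case: ifP => Hd.
  + set d := subm (v - n) (u - n).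
    have HT : Tlab (d, (colA d (subm (u - n) d.-1)).+1).
      by rewrite /Tlab /=; have := colA_lt d (subm (u - n) d.-1); lia.
    rewrite /P HT /zpos /pos Hu /= eqxx /d L1 //; lia.
  + set i := n - subm (v - n) (u - n).
    have HT : Tlab (i, (colA i (subm (v - n) i.-1)).+1).
      by rewrite /Tlab /=; have := colA_lt i (subm (v - n) i.-1); lia.
    have Ev : subm (u - n) i = v - n by apply: L2.
    have Hi : 1 <= i <= h by lia.
    have zn : subm (u - n) i.-1 < n by apply: subm_lt; lia.
    have [ne1 _ _] := col_ne Hi zn.
    have Ez : subm (v - n) i.-1 = subm (subm (u - n) i.-1) i.
      by rewrite -Ev L3 //; lia.
    rewrite /P HT /zpos /pos Hu /= Ez eqSS eq_sym (negbTE ne1) eqxx Ev; lia.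
Qed.
Lemma pos_lt (u : vtx n) : pos u < n.
Proof. have := ltn_ord u; rewrite /pos; case: ifP; lia. Qed.

Lemma pos_ne (u v : vtx n) : u != v -> (u < n) = (v < n) -> pos u != pos v.
Proof.
move=> /eqP uv E; apply/eqP => Ep; apply: uv; apply: val_inj => /=.
have := ltn_ord u; have := ltn_ord v; move: Ep; rewrite /pos -E; splitifs; lia.
Qed.

Lemma col_sym u v : u != v -> col u v = col v u.
Proof.
move=> uv; rewrite /col.
case Hu: (u < n); case Hv: (v < n) => //=.
- have ne := pos_ne uv (etrans Hu (esym Hv)).
  rewrite (L4 (pos_lt u) (pos_lt v) ne).
  have := subm0 (pos_lt u) (pos_lt v) ne; have := subm_lt (pos_lt v) (pos_lt u).
  move: (subm (pos v) (pos u)) => d d1 d2.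
  case: ifP => H1; case: ifP => H2; try lia.
  + have E : n - (n - d) = d by lia. by rewrite E.
  + by [].
- have ne := pos_ne uv (etrans Hu (esym Hv)).
  rewrite (L4 (pos_lt u) (pos_lt v) ne).
  have := subm0 (pos_lt u) (pos_lt v) ne; have := subm_lt (pos_lt v) (pos_lt u).
  move: (subm (pos v) (pos u)) => d d1 d2.
  case: ifP => H1; case: ifP => H2; try lia.
  + have E : n - (n - d) = d by lia. by rewrite E.
  + by [].
Qed.

Lemma col_inj u v v' : u != v -> u != v' -> col u v = col u v' -> v = v'.
Proof.
move=> uv uv' E; apply: val_inj => /=.
by rewrite -(P_col uv) -(P_col uv') E.
Qed.

Definition pset (Pr : vtx n -> vtx n -> bool) : {set {set vtx n}} :=
  [set e | [exists x, exists y, Pr x y && (e == [set x; y])]].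
Definition Fk k := pset (fun u v => (u != v) && (col u v == k)).

Lemma psetP (Pr : vtx n -> vtx n -> bool) e : reflect (exists x y, Pr x y /\ e = [set x; y]) (e \in pset Pr).
Proof.
rewrite inE; apply: (iffP existsP) => [[x /existsP [y /andP [H /eqP ->]]]|[x [y [H ->]]]].
  by exists x, y.
by exists x; apply/existsP; exists y; rewrite H eqxx.
Qed.

Section Gen.
Variable L : seq (nat * nat).
Hypothesis L_uniq : uniq L.
Hypothesis L_size : size L = (2 * n).-1.
Hypothesis L_col : forall u v, u != v -> col u v \in L.

Lemma col_surj u k : k \in L -> exists v, u != v /\ col u v = k.
Proof.
move=> kL.
set s := [seq col u v | v <- enum [set~ u]].
have su : uniq s.
  rewrite map_inj_in_uniq ?enum_uniq // => v v'.
  rewrite !mem_enum !inE => vu v'u; apply: col_inj; by rewrite eq_sym.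
have sub : {subset s <= L}.
  move=> k' /mapP [v]; rewrite mem_enum !inE => vu ->; apply: L_col; by rewrite eq_sym.
have sz : size L <= size s by rewrite size_map -cardE cardsC1 card_ord L_size.
have [_ Es] := uniq_min_size su sub sz.
move: kL; rewrite -Es => /mapP [v]; rewrite mem_enum !inE => vu ->.
by exists v; rewrite eq_sym.
Qed.

Lemma one_factor_Fk k : k \in L -> one_factor (Fk k).
Proof.
move=> kL; split.
  move=> e; rewrite /Fk => /psetP [x [y [/andP [xy _] ->]]]; by rewrite /is_edge cards2 xy.
move=> w.
have [v0 [wv0 E0]] := col_surj w kL.
suff -> : [set e in Fk k | w \in e] = [set [set w; v0]] by rewrite cards1.
apply/setP => e; rewrite in_set in_set1; apply/idP/idP.
- move=> /andP [/psetP [x [y [/andP [xy /eqP Exy] ->]]]] /set2P [] Ew; subst w.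
  + by rewrite (col_inj xy wv0 (etrans Exy (esym E0))).
  + have yx : y != x by rewrite eq_sym.
    rewrite col_sym // in Exy.
    by rewrite (col_inj yx wv0 (etrans Exy (esym E0))) setUC.
- move=> /eqP ->; rewrite set21 andbT; apply/psetP; exists w, v0.
  by rewrite wv0 E0 eqxx.
Qed.

Lemma count_Fk (e : {set vtx n}) : is_edge e -> count (fun F : {set {set vtx n}} => e \in F) (map Fk L) = 1.
Proof.
move=> /cards2P [x [y [xy ->]]].
rewrite count_map.
have E : forall k, ([set x; y] \in Fk k) = (k == col x y).
  move=> k; apply/idP/idP.
  - move=> /psetP [x' [y' [/andP [xy' /eqP Ek] Es]]].
    have Hx : x \in [set x'; y'] by rewrite -Es set21.
    have Hy : y \in [set x'; y'] by rewrite -Es set22.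
    move: Hx Hy => /set2P [] Ex /set2P [] Ey.
    + by move: xy; rewrite Ex Ey eqxx.
    + by rewrite Ex Ey Ek.
    + by rewrite Ex Ey col_sym 1?eq_sym // Ek.
    + by move: xy; rewrite Ex Ey eqxx.
  - move=> /eqP ->; apply/psetP; exists x, y; by rewrite xy eqxx.
rewrite (eq_count E) count_uniq_mem //; by rewrite L_col.
Qed.

Lemma one_factorization_L : one_factorization (map Fk L).
Proof.
split; first by rewrite size_map.
split.
  by move=> F /mapP [k kL ->]; apply: one_factor_Fk.
exact: count_Fk.
Qed.
End Gen.

Lemma modeq a b : a < 3 * n -> b < 3 * n ->
  (a %% n == b %% n) = [|| a == b, a == b + n, b == a + n, a == b + 2 * n | b == a + 2 * n].
Proof.
move=> ha hb.
have n0 : 0 < n by lia.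
have Ea := divn_eq a n; have Eb := divn_eq b n.
have ra := ltn_pmod a n0; have rb := ltn_pmod b n0.
have qa : a %/ n < 3 by rewrite ltn_divLR.
have qb : b %/ n < 3 by rewrite ltn_divLR.
move: Ea Eb ra rb qa qb.
move: (a %/ n) (b %/ n) (a %% n) (b %% n) => [|[|[|?]]] [|[|[|?]]] ra rb; lia.
Qed.

Definition RA i (u v : vtx n) := [&& u < n, v < n & (u + i) %% n == v %% n].
Definition RB i (u v : vtx n) := [&& n <= u, n <= v & (u + i) %% n == v %% n].
Definition RD j (u v : vtx n) := [&& u < n, n <= v & (u + j) %% n == v %% n].
Definition R i u v := [|| RA i u v, RB i u v | RD (i - 1) u v].

Lemma modadd a i : a < n -> i < n -> (a + i) %% n = addm a i.
Proof.
move=> ha hi; rewrite /addm; case: ifP => H; first by rewrite modn_small.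
have E : a + i = (a + i - n) + n by lia.
rewrite {1}E modnDr modn_small //; lia.
Qed.
Lemma modaddb a i : n <= a -> a < 2 * n -> i < n -> (a + i) %% n = addm (a - n) i.
Proof.
move=> h1 h2 hi; have E : a + i = (a - n + i) + n by lia.
rewrite E modnDr modadd //; lia.
Qed.
Lemma modb a : n <= a -> a < 2 * n -> a %% n = a - n.
Proof.
move=> h1 h2; have E : a = (a - n) + n by lia.
rewrite {1}E modnDr modn_small //; lia.
Qed.

Lemma Rtt i (u v : vtx n) : u < n -> v < n -> i < n -> R i u v = (addm u i == v).
Proof.
move=> hu hv hi.
rewrite /R /RA /RB /RD hu hv /= modadd // (modn_small hv).
have -> : (n <= u) = false by lia.
have -> : (n <= v) = false by lia. by rewrite /= !orbF.
Qed.
Lemma Rbb i (u v : vtx n) : n <= u -> n <= v -> i < n -> R i u v = (addm (u - n) i == v - n).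
Proof.
move=> hu hv hi; have := ltn_ord u; have := ltn_ord v => h1 h2.
rewrite /R /RA /RB /RD hu hv /= modaddb // modb //.
have -> : (u < n) = false by lia. by rewrite /= orbF.
Qed.
Lemma Rtb i (u v : vtx n) : u < n -> n <= v -> 1 <= i <= n -> R i u v = (addm u (i - 1) == v - n).
Proof.
move=> hu hv hi; have := ltn_ord u; have := ltn_ord v => h1 h2.
rewrite /R /RA /RB /RD hu hv /= (modadd (a:=u) (i:=i-1)) ?(modb (a:=v)) //; lia.
Qed.
Lemma Rbt i (u v : vtx n) : n <= u -> v < n -> R i u v = false.
Proof.
move=> hu hv; rewrite /R /RA /RB /RD hu hv /=.
have -> : (u < n) = false by lia.
have -> : (n <= v) = false by lia.
by [].
Qed.

Lemma C1f u v : u != v -> Tlab (col u v) -> R (col u v).1 u v || R (col u v).1 v u.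
Proof.
move=> /eqP uv. have uv' : (u:nat) <> v by move=> E; apply uv; apply: val_inj.
have := ltn_ord u; have := ltn_ord v.
rewrite /col /pos /zpos.
case Hu: (u < n); case Hv: (v < n) => //= Hv2 Hu2.
- case: ifP => Hd; rewrite /Tlab /= => HT; rewrite !Rtt //; try lia;
  rewrite /addm /subm; splitifs; lia.
- case: ifP => Hd; rewrite /Tlab /= => HT.
  + rewrite (@Rtb _ u v) ?(@Rbt _ v u) //; try lia. rewrite orbF /addm /subm; splitifs; lia.
  + exfalso; move: HT; apply/negP/HDT. have := subm_lt (a:=v - n) (i:=u); lia.
- case: ifP => Hd; rewrite /Tlab /= => HT.
  + rewrite (@Rbt _ u v) ?(@Rtb _ v u) //=; try lia. rewrite /addm /subm; splitifs; lia.
  + exfalso; move: HT; apply/negP/HDT. have := subm_lt (a:=u - n) (i:=v); lia.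
- have Hu' : n <= u by lia. have Hv' : n <= v by lia.
  case: ifP => Hd; rewrite /Tlab /= => HT; rewrite !Rbb //; try lia;
  rewrite /addm /subm; splitifs; lia.
Qed.
Ltac gencol := repeat match goal with
  | |- context [colA ?a ?b] => have := colA_lt a b; move: (colA a b) => ?
  | |- context [colM ?a ?b] => have := colM_lt a b; move: (colM a b) => ?
  end.

Lemma C1b i u v : 1 <= i <= h -> R i u v ->
  (u != v) && (col u v \in [:: (i,1); (i,2); (i,3)]).
Proof.
move=> Hi. have := ltn_ord u; have := ltn_ord v => Hv2 Hu2.
rewrite /col /pos /zpos.
case Hu: (u < n); case Hv: (v < n) => /=.
- rewrite Rtt //; try lia. move/eqP => Ev.
  apply/andP; split.
    rewrite -val_eqE /= -Ev /addm; splitifs; lia.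
  rewrite -Ev; case: ifP => Hd; move: Hd; gencol; rewrite !inE !xpair_eqE /addm /subm; splitifs; lia.
- rewrite Rtb //; try lia. move/eqP => Ev.
  apply/andP; split.
    by apply/eqP => E; rewrite E Hv in Hu.
  rewrite -Ev; case: ifP => Hd.
    move: Hd; gencol; rewrite !inE !xpair_eqE /addm /subm; splitifs; lia.
  exfalso; move: Hd; rewrite /addm /subm; splitifs; lia.
- by rewrite Rbt //; lia.
- rewrite Rbb //; try lia. move/eqP => Ev.
  apply/andP; split.
    rewrite -val_eqE /=; apply/eqP => E; move: Ev; rewrite E /addm; splitifs; lia.
  rewrite -Ev; case: ifP => Hd; move: Hd; gencol; rewrite !inE !xpair_eqE /addm /subm; splitifs; lia.
Qed.
Lemma RDtb j (u v : vtx n) : u < n -> n <= v -> j < n -> RD j u v = (addm u j == v - n).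
Proof.
move=> hu hv hj; have := ltn_ord v => h2.
by rewrite /RD hu hv /= (modadd (a:=u) (i:=j)) ?(modb (a:=v)).
Qed.
Lemma RDf j (u v : vtx n) : ~~ ((u < n) && (n <= v)) -> RD j u v = false.
Proof. by rewrite /RD => /negbTE; case: (u < n) => //= ->. Qed.

Lemma col_cases u v : u != v -> Tlab (col u v) \/ exists2 d, h <= d < n & col u v = Dlab d.
Proof.
move=> /eqP uv. have uv' : (u:nat) <> v by move=> E; apply uv; apply: val_inj.
have := ltn_ord u; have := ltn_ord v.
rewrite /col /pos /zpos.
case Hu: (u < n); case Hv: (v < n) => //= Hv2 Hu2.
- left; case: ifP => Hd; move: Hd; rewrite /Tlab /=; gencol; rewrite /subm; splitifs; lia.
- case: ifP => Hd.
  + left; move: Hd; rewrite /Tlab /=; gencol; rewrite /subm; splitifs; lia.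
  + right; eexists; last by reflexivity. have := subm_lt (a:=v - n) (i:=u); lia.
- case: ifP => Hd.
  + left; move: Hd; rewrite /Tlab /=; gencol; rewrite /subm; splitifs; lia.
  + right; eexists; last by reflexivity. have := subm_lt (a:=u - n) (i:=v); lia.
- left; case: ifP => Hd; move: Hd; rewrite /Tlab /=; gencol; rewrite /subm; splitifs; lia.
Qed.

Lemma C2f d u v : h <= d < n -> u != v -> col u v = Dlab d -> RD d u v || RD d v u.
Proof.
move=> Hd uv Hc.
have HT : ~~ Tlab (col u v) by rewrite Hc; apply: HDT.
have uv' : (u:nat) <> v by move=> E; move/eqP: uv; apply; apply: val_inj.
have := ltn_ord u; have := ltn_ord v.
move: Hc HT; rewrite /col /pos /zpos.
case Hu: (u < n); case Hv: (v < n) => //= Hc HT Hv2 Hu2.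
- exfalso; move: HT; case: ifP => Hd'; move: Hd'; rewrite /Tlab /=; gencol; rewrite /subm; splitifs; lia.
- move: Hc HT; case: ifP => Hd' Hc HT.
    exfalso; move: HT Hd'; rewrite /Tlab /=; gencol; rewrite /subm; splitifs; lia.
  have Hd2 : h <= subm (v - n) u < n by have := subm_lt (a:=v - n) (i:=u); lia.
  have dd : subm (v - n) u = d by rewrite -(HDinv Hd2) -(HDinv Hd) Hc.
  rewrite RDtb //; try lia. by rewrite -dd L1 //; lia.
- move: Hc HT; case: ifP => Hd' Hc HT.
    exfalso; move: HT Hd'; rewrite /Tlab /=; gencol; rewrite /subm; splitifs; lia.
  have Hd2 : h <= subm (u - n) v < n by have := subm_lt (a:=u - n) (i:=v); lia.
  have dd : subm (u - n) v = d by rewrite -(HDinv Hd2) -(HDinv Hd) Hc.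
  rewrite (@RDf _ u v) ?Hu //= RDtb //; try lia. by rewrite -dd L1 //; lia.
- exfalso; move: HT; case: ifP => Hd'; move: Hd'; rewrite /Tlab /=; gencol; rewrite /subm; splitifs; lia.
Qed.

Lemma C2b d u v : h <= d < n -> RD d u v -> (u != v) && (col u v == Dlab d).
Proof.
move=> Hd HR.
have [Hu Hv] : u < n /\ n <= v by move: HR; rewrite /RD => /and3P [].
have := ltn_ord v => Hv2.
move: HR; rewrite RDtb //; try lia. move/eqP => Ev.
apply/andP; split.
  by apply/eqP => E; move: Hu; rewrite E; lia.
rewrite /col /pos /zpos Hu.
have -> : (v < n) = false by lia.
rewrite /= -Ev.
have -> : subm (addm u d) u = d by rewrite /addm /subm; splitifs; lia.
by have -> : (d < h) = false by lia.
Qed.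
Lemma pset_eq (P1 P2 : vtx n -> vtx n -> bool) :
  (forall u v, P1 u v -> P2 u v || P2 v u) ->
  (forall u v, P2 u v -> P1 u v || P1 v u) -> pset P1 = pset P2.
Proof.
have H : forall (Q1 Q2 : vtx n -> vtx n -> bool), (forall u v, Q1 u v -> Q2 u v || Q2 v u) ->
    {subset pset Q1 <= pset Q2}.
  move=> Q1 Q2 HQ e /psetP [x [y [Hxy ->]]]; apply/psetP.
  case/orP: (HQ _ _ Hxy) => H2; first by exists x, y.
  by exists y, x; rewrite setUC.
move=> H1 H2; apply/setP => e; apply/idP/idP; exact: H.
Qed.

Lemma psetU (P1 P2 : vtx n -> vtx n -> bool) :
  pset P1 :|: pset P2 = pset (fun u v => P1 u v || P2 u v).
Proof.
apply/setP => e; rewrite in_setU; apply/idP/idP.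
- case/orP => /psetP [x [y [H ->]]]; apply/psetP; exists x, y; by rewrite H ?orbT.
- move=> /psetP [x [y [/orP [] H ->]]]; apply/orP; [left|right]; apply/psetP; by exists x, y.
Qed.

Lemma AsetE i : Aset n i = pset (RA i).
Proof. apply/setP => e; rewrite !inE; do 2 (apply: eq_existsb => ?); by rewrite /RA -!andbA. Qed.
Lemma BsetE i : Bset n i = pset (RB i).
Proof. apply/setP => e; rewrite !inE; do 2 (apply: eq_existsb => ?); by rewrite /RB -!andbA. Qed.
Lemma DsetE i : Dset n i = pset (RD i).
Proof. apply/setP => e; rewrite !inE; do 2 (apply: eq_existsb => ?); by rewrite /RD -!andbA. Qed.

Lemma T_union i : 1 <= i <= h ->
  Fk (i,1) :|: Fk (i,2) :|: Fk (i,3) = Aset n i :|: Bset n i :|: Dset n (i - 1).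
Proof.
move=> Hi.
rewrite AsetE BsetE DsetE /Fk !psetU; apply: pset_eq => u v.
- move=> H.
  have [uv Hc] : u != v /\ col u v \in [:: (i,1); (i,2); (i,3)].
    by move: H; rewrite !inE; case: (u != v) => //=; rewrite orbA.
  have [HT H1] : Tlab (col u v) /\ (col u v).1 = i.
    move: Hc; rewrite !inE /Tlab; case: (col u v) => a b; rewrite !xpair_eqE /=; lia.
  move: (C1f uv HT); rewrite H1 /R -!orbA; by [].
- move=> H.
  have HR : R i u v by move: H; rewrite /R -!orbA.
  move: (C1b Hi HR) => /andP [uv Hc].
  apply/orP; left; move: Hc; rewrite !inE uv /=; by rewrite -!orbA.
Qed.

Lemma D_eq d : h <= d < n -> Fk (Dlab d) = Dset n d.
Proof.
move=> Hd; rewrite DsetE /Fk; apply: pset_eq => u v.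
- by move=> /andP [uv /eqP Hc]; apply: C2f.
- by move=> H; rewrite (C2b Hd H).
Qed.
End Constr.

Unset Implicit Arguments.

Theorem lemma5 (n : nat) :
  prime n -> (n %% 6 = 1 \/ n %% 6 = 5) ->
  exists T : nat -> nat -> {set {set 'I_(2 * n)}},
    (n %% 6 = 5 ->
       one_factorization
         [seq T i j | i <- iota 1 ((2 * n - 1) %/ 3), j <- iota 1 3]
       /\ (forall i, 1 <= i <= (n - 1) %/ 2 ->
             T i 1 :|: T i 2 :|: T i 3 = Aset n i :|: Bset n i :|: Dset n (i - 1))
       /\ (forall i, (n + 1) %/ 2 <= i <= (2 * n - 1) %/ 3 ->
             [/\ T i 1 = Dset n (3 * i - n - 2),
                 T i 2 = Dset n (3 * i - n - 1) &
                 T i 3 = Dset n (3 * i - n)]))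
    /\
    (n %% 6 = 1 ->
       one_factorization
         ([seq T i j | i <- iota 1 ((n - 1) %/ 2), j <- iota 1 3]
          ++ [seq Dset n i | i <- iota ((n - 1) %/ 2) (n - (n - 1) %/ 2)])
       /\ (forall i, 1 <= i <= (n - 1) %/ 2 ->
             T i 1 :|: T i 2 :|: T i 3 = Aset n i :|: Bset n i :|: Dset n (i - 1))).
Proof.
move=> pn Hn.
have n1 := prime_gt1 pn.
have Hn2 : n %% 2 = 1 by lia.
have Hn3 : 3 <= n.
  case: Hn => H; last by lia.
  have : n != 1 by lia. lia.
case: Hn => H6.
-
  pose Dlab := fun d : nat => (d, 0).
  pose Dinv := fun k : nat * nat => k.1.
  have HDinv : forall d, (n - 1) %/ 2 <= d < n -> Dinv (Dlab d) = d by [].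
  have HDT : forall d, (n - 1) %/ 2 <= d < n -> ~~ Tlab n (Dlab d)
    by move=> d _; rewrite /Tlab /= andbF.
  exists (fun i j => Fk n Dlab (i, j)); split; first by lia.
  move=> _; split; last by move=> i Hi; apply: T_union.
  set h := (n - 1) %/ 2.
  pose L := [seq (i, j) | i <- iota 1 h, j <- iota 1 3] ++ [seq Dlab d | d <- iota h (n - h)].
  have -> : [seq Fk n Dlab (i, j) | i <- iota 1 h, j <- iota 1 3] ++
            [seq Dset n i | i <- iota h (n - h)] = map (Fk n Dlab) L.
    rewrite map_cat map_allpairs; congr cat; rewrite -map_comp; apply/eq_in_map => d.
    rewrite mem_iota => Hd /=; rewrite (D_eq Hn2 Hn3 HDinv HDT) //; lia.
  apply: (one_factorization_L Hn2 Hn3 HDinv HDT).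
  + rewrite cat_uniq; apply/and3P; split.
    * apply: allpairs_uniq; rewrite ?iota_uniq //.
      by move=> [a b] [c d] _ _ /= [-> ->].
    * apply/hasPn => k /mapP [d _ ->]; apply/negP => /allpairsP [[a b] [_ /= Hb E]].
      by move: Hb; rewrite /Dlab in E; case: E => _ <-; by [].
    * by rewrite map_inj_uniq ?iota_uniq // => a b [].
  + rewrite /L size_cat size_allpairs size_map !size_iota; lia.
  + move=> u v uv.
    case: (col_cases Hn2 Hn3 Dlab uv) => [HT|[d Hd ->]]; rewrite mem_cat; apply/orP.
    * left; apply/allpairsP; exists (col Dlab u v); move: HT; rewrite /Tlab.
      case: (col Dlab u v) => a b /= HT; rewrite !mem_iota; split => //; rewrite ?/h ?inE; lia.
    * right; apply/mapP; exists d => //; rewrite mem_iota; lia.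
-
  pose Dlab := fun d : nat => ((d + n + 2) %/ 3, (d + n + 2) %% 3 + 1).
  pose Dinv := fun k : nat * nat => 3 * k.1 + k.2 - n - 3.
  have HDinv : forall d, (n - 1) %/ 2 <= d < n -> Dinv (Dlab d) = d.
    move=> d Hd; rewrite /Dinv /Dlab /=; lia.
  have HDT : forall d, (n - 1) %/ 2 <= d < n -> ~~ Tlab n (Dlab d).
    move=> d Hd; rewrite /Tlab /Dlab /=; lia.
  exists (fun i j => Fk n Dlab (i, j)); split; last by lia.
  move=> _; split; last split.
  + set m := (2 * n - 1) %/ 3.
    pose L := [seq (i, j) | i <- iota 1 m, j <- iota 1 3].
    have -> : [seq Fk n Dlab (i, j) | i <- iota 1 m, j <- iota 1 3] = map (Fk n Dlab) L
      by rewrite map_allpairs.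
    apply: (one_factorization_L Hn2 Hn3 HDinv HDT).
    * apply: allpairs_uniq; rewrite ?iota_uniq //.
      by move=> [a b] [c d] _ _ /= [-> ->].
    * rewrite /L size_allpairs !size_iota; lia.
    * move=> u v uv; apply/allpairsP; exists (col Dlab u v).
      case: (col_cases Hn2 Hn3 Dlab uv) => [HT|[d Hd ->]].
      - move: HT; rewrite /Tlab.
        case: (col Dlab u v) => a b /= HT; rewrite !mem_iota; split => //; rewrite ?/m ?inE; lia.
      - rewrite /Dlab /= !mem_iota; split => //; rewrite ?/m ?inE; lia.
  + by move=> i Hi; apply: T_union.
  + move=> i Hi.
    have E : forall j, 1 <= j <= 3 -> Fk n Dlab (i, j) = Dset n (3 * i - n - 3 + j).
      move=> j Hj; rewrite -(D_eq Hn2 Hn3 HDinv HDT); last by lia.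
      congr Fk; rewrite /Dlab; congr pair; lia.
    rewrite !E //.
    have -> : 3 * i - n - 3 + 1 = 3 * i - n - 2 by lia.
    have -> : 3 * i - n - 3 + 2 = 3 * i - n - 1 by lia.
    have -> : 3 * i - n - 3 + 3 = 3 * i - n by lia.
    by [].
Qed.
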